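(* Let $G\le S_n$ be fusion controlled and $C$ a connected component of $\widetilde P_0(G)$, and let $\mathcal T(C)$ be the set of types of vertices of $C$. For $T\in\mathcal T(G_0)$ let $k(T)$ be the number of vertices of $\widetilde P_0(G)$ of type $T$. Then: (i) for all $T,T'\in\mathcal T(C)$, $k(T)/k_C(T)=k(T')/k_C(T')$; (ii) $C$ is isomorphic to its image $\widetilde t(C)$ iff there exists $T\in\mathcal T(C)$ with $k_C(T)=1$ and $k(T)=k(T')$ for every $T'\in\mathcal T(C)$; (iii) if $C$ contains all vertices of $\widetilde P_0(G)$ of some type $T$, then $C$ contains all vertices of type $T'$ for every $T'\in\mathcal T(C)$; (iv) if some $T\in\mathcal T(C)$ satisfies $k_C(T)=k(T)>1$, then $C\not\cong\widetilde t(C)$.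
   Context: $G_0=G\setminus\{1\}$; $[x]=\{y:\langle y\rangle=\langle x\rangle\}$; $\widetilde P_0(G)$: vertex set $\{[x]:x\in G_0\}$, distinct $[x],[y]$ adjacent iff some representatives are one a positive power of the other. For $\psi\in S_n$, $T_\psi$ is the partition of $n$ given by orbit lengths of $\langle\psi\rangle$; the type of $[\psi]$ is $T_\psi$. For $T=[m_1^{t_1},\dots,m_k^{t_k}]$, $T^a=[(m_i/\gcd(a,m_i))^{t_i\gcd(a,m_i)}]_i$. $\mathcal T(G_0)=\{T_\psi:\psi\in G_0\}$; $P_0(\mathcal T(G))$: vertex set $\mathcal T(G_0)$, distinct $T,T'$ adjacent iff one is a power of the other. $\widetilde t(C)$ is the subgraph of $P_0(\mathcal T(G))$ with vertex set $\mathcal T(C)$ and edges $\{T_\psi,T_\varphi\}$ for edges $\{[\psi],[\varphi]\}$ of $C$. $k_C(T)$ is the number of vertices of $C$ of type $T$. $G$ is fusion controlled if for all $\psi\in G$, $x\in S_n$ with $x^{-1}\psi x\in G$ there is $y\in N_{S_n}(G)$ with $x^{-1}\psi x=y^{-1}\psi y$. *)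

(* Defs.v *)
From HB Require Import structures.
From mathcomp Require Import all_boot all_order all_algebra all_fingroup.
Set Implicit Arguments. Unset Strict Implicit. Unset Printing Implicit Defensive.
Import GRing.Theory.

Local Open Scope group_scope.

(* Permutations of {0,...,n-1} ; S_n is the full group [set: perm n]. *)
Notation perm n := {perm 'I_n}.

Definition gcls (n : nat) (x : perm n) : {set perm n} :=
  [set y | <[y]> == <[x]>].

(* vertices of P~_0(G): the classes [x] with x in G_0 = G \ {1} *)
Definition isvert (n : nat) (G : {group perm n}) (V : {set perm n}) : bool :=
  [exists x in G, (x != 1) && (V == gcls x)].

Definition padj (n : nat) (G : {group perm n}) (V W : {set perm n}) : bool :=
  [&& isvert G V, isvert G W, V != W &
    [exists x in V, exists y in W,
      [exists k : 'I_(#|G|).+1, (0 < val k) && ((y == x ^+ k) || (x == y ^+ k))]]].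

Definition comp (n : nat) (G : {group perm n}) (V0 : {set perm n})
  : {set {set perm n}} := [set W | connect (padj G) V0 W].

Definition is_component (n : nat) (G : {group perm n}) (C : {set {set perm n}}) :=
  exists2 V0, isvert G V0 & C = comp G V0.

(* the type T_psi: partition of n given by the orbit lengths of <psi>,
   written as a non-increasing list *)
Definition ptype (n : nat) (psi : perm n) : seq nat :=
  sort geq (map (fun X : {set 'I_n} => #|X|) (enum (porbits psi))).

Definition has_type (n : nat) (V : {set perm n}) (T : seq nat) : bool :=
  [exists psi in V, ptype psi == T].

Definition in_types (n : nat) (C : {set {set perm n}}) (T : seq nat) : Prop :=
  exists2 V, V \in C & has_type V T.

Definition kG (n : nat) (G : {group perm n}) (T : seq nat) : nat :=
  #|[set V | isvert G V & has_type V T]|.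

Definition kC (n : nat) (C : {set {set perm n}}) (T : seq nat) : nat :=
  #|[set V in C | has_type V T]|.

Definition tpow (T : seq nat) (a : nat) : seq nat :=
  sort geq (flatten [seq nseq (gcdn a m) (m %/ gcdn a m) | m <- T]).

Definition tadj (T T' : seq nat) : Prop :=
  T <> T' /\ exists2 a, 0 < a & (T' = tpow T a \/ T = tpow T' a).

Definition tCedge (n : nat) (G : {group perm n}) (C : {set {set perm n}})
  (T T' : seq nat) : Prop :=
  tadj T T' /\
  exists V, exists W, [/\ V \in C, W \in C, padj G V W, has_type V T & has_type W T'].

(* C (as induced subgraph of P~_0(G)) is isomorphic to the graph t~(C) *)
Definition iso_tC (n : nat) (G : {group perm n}) (C : {set {set perm n}}) : Prop :=
  exists f : {set perm n} -> seq nat,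
    [/\ {in C &, injective f},
        (forall V, V \in C -> in_types C (f V)),
        (forall T, in_types C T -> exists2 V, V \in C & f V = T) &
        {in C &, forall V W, padj G V W <-> tCedge G C (f V) (f W)}].

Definition fusion_controlled (n : nat) (G : {group perm n}) : Prop :=
  forall psi x : perm n, psi \in G -> psi ^ x \in G ->
    exists2 y, y \in 'N(G) & psi ^ x = psi ^ y.

(* Main.v *)
Require Import Defs.
From HB Require Import structures.
From mathcomp Require Import all_boot all_order all_algebra all_fingroup.
Set Implicit Arguments. Unset Strict Implicit. Unset Printing Implicit Defensive.

Notation ford := fingraph.order.
Section Basics.
Variables (T : finType) (s : {perm T}).

Lemma porbit_fconnect x y : (y \in porbit s x) = fconnect s x y.
Proof.
apply/porbitP/idP => [[i ->]|H]; first by rewrite permX fconnect_iter.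
by exists (findex s x y); rewrite permX iter_findex.
Qed.

Lemma card_porbit_order x : #|porbit s x| = ford s x.
Proof. by apply: eq_card => y; rewrite porbit_fconnect. Qed.

Lemma iter_order_mul x q : iter (q * ford s x) s x = x.
Proof. elim: q => [|q IH] //; by rewrite mulSn iterD IH (fingraph.iter_order (@perm_inj _ s)). Qed.

Lemma iter_mod x k : iter k s x = iter (k %% ford s x) s x.
Proof. by rewrite {1}(divn_eq k (ford s x)) addnC iterD iter_order_mul. Qed.

Lemma findex_mod x k : findex s x (iter k s x) = k %% ford s x.
Proof. by rewrite iter_mod findex_iter // ltn_pmod // fingraph.order_gt0. Qed.

Lemma iter_eq_dvd x k : (iter k s x == x) = (ford s x %| k).
Proof. by rewrite eq_sym -(findex_eq0 s) findex_mod. Qed.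

End Basics.

Lemma cop_div k m : 0 < gcdn k m -> coprime (m %/ gcdn k m) (k %/ gcdn k m).
Proof.
move=> g0; rewrite /coprime.
have := muln_gcdl (m %/ gcdn k m) (k %/ gcdn k m) (gcdn k m).
rewrite !divnK ?dvdn_gcdr ?dvdn_gcdl // => H.
by rewrite -(eqn_pmul2r g0) H mul1n gcdnC.
Qed.

Lemma dvd_mul_gcd m k j : 0 < m ->
  (m %| k * j) = (m %/ gcdn k m %| j).
Proof.
move=> m0.
have g0 : 0 < gcdn k m by rewrite gcdn_gt0 m0 orbT.
have cop : coprime (m %/ gcdn k m) (k %/ gcdn k m).
  exact: cop_div.
set g := gcdn k m.
have Em : m = (m %/ g) * g by rewrite divnK // dvdn_gcdr.
have Ek : k = (k %/ g) * g by rewrite divnK // dvdn_gcdl.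
rewrite {1}Em {1}Ek mulnAC dvdn_pmul2r //.
by rewrite Gauss_dvdr.
Qed.

Lemma order_expg (T : finType) (s : {perm T}) x k :
  ford (s ^+ k)%g x = ford s x %/ gcdn k (ford s x).
Proof.
have H j : (ford (s ^+ k)%g x %| j) = (ford s x %/ gcdn k (ford s x) %| j).
  rewrite -iter_eq_dvd -permX -expgM permX iter_eq_dvd.
  by rewrite dvd_mul_gcd // fingraph.order_gt0.
apply/eqP; rewrite eqn_dvd -H dvdnn /= H dvdnn //.
Qed.
Section Count.
Variables (T : finType) (s : {perm T}).

Definition ocount (v : nat) := count (pred1 v) [seq #|X| | X : {set T} <- enum (porbits s)].

Lemma sum_orbits (h : pred nat) :
  \sum_(O in porbits s | h #|O|) #|O| = #|[set z | h #|porbit s z|]|.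
Proof.
rewrite -sum1_card (partition_big (porbit s) (mem (porbits s))) /=; last first.
  by move=> z _; apply: imset_f.
rewrite big_mkcondr /=; apply: eq_bigr => O /imsetP [x _ ->].
case Hh: (h #|porbit s x|).
  rewrite -sum1_card; apply: eq_bigl => i; rewrite inE eq_porbit_mem.
  case Hi: (i \in porbit s x); rewrite ?andbF //.
  by move: Hi; rewrite -eq_porbit_mem => /eqP ->; rewrite Hh.
rewrite big_pred0 // => i; rewrite inE eq_porbit_mem.
case Hi: (i \in porbit s x); rewrite ?andbF //.
by move: Hi; rewrite -eq_porbit_mem => /eqP ->; rewrite Hh.
Qed.

Lemma ocount_mul v : v * ocount v = #|[set z | #|porbit s z| == v]|.
Proof.
rewrite /ocount count_map -sum1_count big_enum_cond big_distrr /=.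
rewrite -(sum_orbits (fun m => m == v)); apply: eq_bigr => O /andP [_ /eqP ->].
by rewrite muln1.
Qed.

Lemma ocount0 : ocount 0 = 0.
Proof.
rewrite /ocount count_map; apply/eqP; rewrite -leqn0 leqNgt -has_count.
apply/hasP => -[O /[!mem_enum] /imsetP [x _ ->]] /=.
by rewrite (negbTE (card_porbit_neq0 s x)).
Qed.

End Count.

Lemma ocount_eq (T : finType) (s t : {perm T}) :
  (forall v, 0 < v -> #|[set z | #|porbit s z| == v]| = #|[set z | #|porbit t z| == v]|) ->
  forall v, ocount s v = ocount t v.
Proof.
move=> H [|v]; first by rewrite !ocount0.
by apply/eqP; rewrite -(eqn_pmul2l (ltn0Sn v)) !ocount_mul H.
Qed.

Lemma ptype_count n (s : {perm 'I_n}) (L : seq nat) :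
  (forall v, count (pred1 v) L = ocount s v) -> sort geq L = ptype s.
Proof.
move=> H; rewrite /ptype; apply/perm_sortP.
- by move=> x y; apply: leq_total.
- by move=> x y z Hyx Hzy; apply: leq_trans Hzy Hyx.
- by move=> x y /andP [H1 H2]; apply/eqP; rewrite eqn_leq; apply/andP; split.
rewrite /perm_eq; apply/allP => x _ /=; apply/eqP; exact: H.
Qed.

Lemma porbit_conj (T : finType) (s y : {perm T}) z :
  porbit (s ^ y)%g (y z) = [set y w | w in porbit s z].
Proof.
apply/setP => w; apply/porbitP/imsetP => [[i ->]|[w' /porbitP [i ->] ->]].
  by exists ((s ^+ i)%g z); [apply: mem_porbit | rewrite -conjXg permJ].
by exists i; rewrite -conjXg permJ.
Qed.

Lemma ptype_conj n (s y : {perm 'I_n}) : ptype (s ^ y)%g = ptype s.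
Proof.
apply: ptype_count => v; apply: ocount_eq => u _.
rewrite -(card_preimset _ (@perm_inj _ y)); apply: eq_card => z.
by rewrite !inE porbit_conj card_imset //; apply: perm_inj.
Qed.

Lemma ptype_cycle n (s t : {perm 'I_n}) : <[s]>%g = <[t]>%g -> ptype s = ptype t.
Proof.
move=> E; have Eo : porbit s =1 porbit t by move=> z; rewrite !porbit.unlock E.
by rewrite /ptype /porbits (eq_imset _ Eo).
Qed.
Lemma ptype_expg n (s : {perm 'I_n}) k : ptype (s ^+ k)%g = tpow (ptype s) k.
Proof.
rewrite /tpow; symmetry; apply: ptype_count => -[|v].
  rewrite ocount0 count_flatten sumnE !big_map; apply/eqP.
  rewrite sum_nat_seq_eq0; apply/allP => m Hm /=.
  move: Hm; rewrite /ptype mem_sort => /mapP [X /[!mem_enum] /imsetP [x _ ->] ->].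
  have m0 : 0 < #|porbit s x| by rewrite lt0n card_porbit_neq0.
  have g0 : 0 < gcdn k #|porbit s x| by rewrite gcdn_gt0 m0 orbT.
  have gt : 0 < #|porbit s x| %/ gcdn k #|porbit s x|.
    by rewrite divn_gt0 // dvdn_leq // dvdn_gcdr.
  rewrite count_nseq /=.
  by rewrite (negbTE (lt0n_neq0 gt)).
set F := fun m => nseq (gcdn k m) (m %/ gcdn k m).
apply/eqP; rewrite -(eqn_pmul2l (ltn0Sn v)) ocount_mul.
rewrite count_flatten -map_comp.
have -> : sumn [seq (count (pred1 v.+1) \o F) i | i <- ptype s] =
          sumn [seq (count (pred1 v.+1) \o F) i | i <- [seq #|X| | X : {set 'I_n} <- enum (porbits s)]].
  by apply: perm_sumn; apply: perm_map; rewrite /ptype perm_sort.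
rewrite sumnE !big_map big_enum big_distrr /=.
rewrite (eq_bigr (fun X : {set 'I_n} => if #|X| %/ gcdn k #|X| == v.+1 then #|X| else 0)); last first.
  move=> X _; rewrite /F count_nseq /=; case: eqP => [<-|_].
    by rewrite /= mul1n divnK // dvdn_gcdr.
  by rewrite mul0n muln0.
rewrite -big_mkcondr /=.
rewrite (sum_orbits s (fun m => m %/ gcdn k m == v.+1)); apply/eqP; apply: eq_card => z.
by rewrite !inE !card_porbit_order order_expg.
Qed.

Definition rep (T : finType) (O : {set T}) (d : T) := odflt d [pick w in O].

Lemma rep_in (T : finType) (O : {set T}) d w0 : w0 \in O -> rep O d \in O.
Proof. by rewrite /rep; case: pickP => [w ->|H] //=; rewrite H. Qed.

Lemma rep_indep (T : finType) (O : {set T}) d d' w0 : w0 \in O -> rep O d = rep O d'.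
Proof. by rewrite /rep; case: pickP => [w _|H] //=; rewrite H. Qed.

Section Conj.
Variables (T : finType) (s t : {perm T}).
Let Ls := sort (relpre (fun X : {set T} => #|X|) geq) (enum (porbits s)).
Let Lt := sort (relpre (fun X : {set T} => #|X|) geq) (enum (porbits t)).
Hypothesis Hc : [seq #|X| | X : {set T} <- Ls] = [seq #|X| | X : {set T} <- Lt].

Lemma inLs O : (O \in Ls) = (O \in porbits s).
Proof. by rewrite mem_sort mem_enum. Qed.
Lemma inLt O : (O \in Lt) = (O \in porbits t).
Proof. by rewrite mem_sort mem_enum. Qed.
Lemma uLt : uniq Lt.
Proof. by rewrite sort_uniq enum_uniq. Qed.
Lemma szL : size Ls = size Lt.
Proof. by rewrite -(size_map (fun X : {set T} => #|X|)) Hc size_map. Qed.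

Let j z := index (porbit s z) Ls.
Lemma j_lt z : j z < size Ls.
Proof. by rewrite index_mem inLs imset_f. Qed.
Let a z := rep (porbit s z) z.
Let Ot z := nth set0 Lt (j z).
Let b z := rep (Ot z) z.

Lemma Ot_orbit z : exists w, Ot z = porbit t w.
Proof.
have : Ot z \in porbits t by rewrite -inLt mem_nth // -szL j_lt.
by case/imsetP => w _ ->; exists w.
Qed.

Lemma b_in z : b z \in Ot z.
Proof. by case: (Ot_orbit z) => w E; rewrite /b E (rep_in _ (porbit_id t w)). Qed.

Lemma Ot_b z : Ot z = porbit t (b z).
Proof.
case: (Ot_orbit z) => w E; have := b_in z; rewrite E => H.
by apply/eqP; rewrite eq_sym eq_porbit_mem.
Qed.

Lemma a_in z : a z \in porbit s z.
Proof. by rewrite /a (rep_in _ (porbit_id s z)). Qed.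

Lemma orbit_a z : porbit s (a z) = porbit s z.
Proof. by apply/eqP; rewrite eq_porbit_mem a_in. Qed.

Lemma nth_Ls z : nth set0 Ls (j z) = porbit s z.
Proof. by rewrite nth_index // inLs imset_f. Qed.

Lemma card_Ot z : #|Ot z| = #|porbit s z|.
Proof.
have := congr1 (fun l => nth 0 l (j z)) Hc => /=.
by rewrite !(nth_map set0) ?j_lt // -?szL ?j_lt // nth_Ls.
Qed.

Lemma ford_a z : fingraph.order s (a z) = #|porbit s z|.
Proof. by rewrite -card_porbit_order orbit_a. Qed.

Lemma ford_b z : fingraph.order t (b z) = #|porbit s z|.
Proof. by rewrite -card_porbit_order -Ot_b card_Ot. Qed.

Let i z := findex s (a z) z.
Definition cx z := iter (i z) t (b z).

Lemma iter_i z : iter (i z) s (a z) = z.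
Proof. by apply: iter_findex; rewrite -porbit_fconnect orbit_a porbit_id. Qed.

Lemma same_s z : porbit s (s z) = porbit s z.
Proof. by have := porbit_perm s 1 z; rewrite expg1. Qed.

Lemma cx_s z : cx (s z) = t (cx z).
Proof.
have Ea : a (s z) = a z by rewrite /a same_s; apply: (rep_indep _ _ (porbit_id s z)).
have Ej : j (s z) = j z by rewrite /j same_s.
have Eb : b (s z) = b z by rewrite /b /Ot Ej; apply: (rep_indep _ _ (b_in z)).
rewrite /cx /i Ea Eb.
have -> : findex s (a z) (s z) = (i z).+1 %% fingraph.order s (a z).
  by rewrite -findex_mod iterS iter_i.
by rewrite ford_a -(ford_b z) -iter_mod.
Qed.

Lemma cx_inj : injective cx.
Proof.
move=> z z' E.
have Oz w : porbit t (cx w) = Ot w.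
  by rewrite Ot_b; apply/eqP; rewrite eq_porbit_mem /cx -permX mem_porbit.
have Ej : j z = j z'.
  apply/eqP; rewrite -(nth_uniq set0 _ _ uLt) -?szL ?j_lt //.
  by rewrite -/(Ot z) -/(Ot z') -Oz -Oz E.
have Ep : porbit s z = porbit s z' by rewrite -nth_Ls Ej nth_Ls.
have Ea : a z = a z' by rewrite /a Ep; apply: (rep_indep _ _ (porbit_id s z')).
have Eb : b z = b z' by rewrite /b /Ot Ej; apply: (rep_indep _ _ (b_in z')).
have Ei : i z = i z'.
  have H1 : i z < fingraph.order t (b z).
    by rewrite ford_b -(ford_a z) findex_max // -porbit_fconnect orbit_a porbit_id.
  have H2 : i z' < fingraph.order t (b z).
    by rewrite Eb ford_b -(ford_a z') findex_max // -porbit_fconnect orbit_a porbit_id.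
  by rewrite -(findex_iter H1) -(findex_iter H2); move: E; rewrite /cx Eb => ->.
by rewrite -(iter_i z) -(iter_i z') Ea Ei.
Qed.

Lemma conj_exists : exists x, (s ^ x)%g = t.
Proof.
exists (perm cx_inj); apply/permP => w.
by rewrite -(permKV (perm cx_inj) w) permJ !permE cx_s.
Qed.

End Conj.

Lemma ptype_conjugate n (s t : {perm 'I_n}) : ptype s = ptype t -> exists x, (s ^ x)%g = t.
Proof.
move=> E; apply: conj_exists.
by rewrite -!sort_map; exact: E.
Qed.

Section Graph.
Variables (n : nat) (G : {group {perm 'I_n}}).
Local Open Scope group_scope.
Implicit Types (V W U : {set {perm 'I_n}}) (x y z p q psi : {perm 'I_n}) (T : seq nat).

Lemma isvertP V : reflect (exists2 x, x \in G & x != 1 /\ V = gcls x) (isvert G V).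
Proof.
apply: (iffP existsP) => [[x /andP [xG /andP [x1 /eqP ->]]]|[x xG [x1 ->]]].
  by exists x.
by exists x; rewrite xG x1 eqxx.
Qed.

Lemma vert_mem V psi : isvert G V -> psi \in V -> [/\ psi \in G, psi != 1 & V = gcls psi].
Proof.
case/isvertP => x xG [x1 ->]; rewrite inE => /eqP E; split.
- by rewrite -cycle_subG E cycle_subG.
- by rewrite -cycle_eq1 E cycle_eq1.
- by apply/setP => z; rewrite !inE E.
Qed.

Lemma has_type_uniq V T T' : isvert G V -> has_type V T -> has_type V T' -> T = T'.
Proof.
move=> HV /existsP [p /andP [pV /eqP <-]] /existsP [q /andP [qV /eqP <-]].
case: (vert_mem HV pV) => _ _ E; move: qV; rewrite E inE => /eqP E'.
by apply: ptype_cycle; rewrite E'.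
Qed.

Lemma gclsJ x y : gcls x :^ y = gcls (x ^ y).
Proof.
apply/setP => z; rewrite mem_conjg !inE !cycleJ.
by rewrite -(inj_eq (@conjsg_inj _ y)) conjsgKV.
Qed.

Lemma isvertJ V y : y \in 'N(G) -> isvert G V -> isvert G (V :^ y).
Proof.
move=> yN /isvertP [x xG [x1 ->]]; apply/isvertP; exists (x ^ y).
  by rewrite memJ_norm.
by rewrite conjg_eq1 gclsJ.
Qed.

Lemma has_typeJ V y T : has_type V T -> has_type (V :^ y) T.
Proof.
case/existsP => p /andP [pV /eqP E]; apply/existsP; exists (p ^ y).
by rewrite memJ_conjg pV /= ptype_conj E.
Qed.

Lemma padjJ V W y : y \in 'N(G) -> padj G V W -> padj G (V :^ y) (W :^ y).
Proof.
move=> yN /and4P [HV HW VW /existsP [p /andP [pV /existsP [q /andP [qW /existsP [k /andP [k0 Hk]]]]]]].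
apply/and4P; split; [exact: isvertJ | exact: isvertJ | by rewrite (inj_eq (@conjsg_inj _ y)) |].
apply/existsP; exists (p ^ y); rewrite memJ_conjg pV /=.
apply/existsP; exists (q ^ y); rewrite memJ_conjg qW /=.
by apply/existsP; exists k; rewrite k0 /= -!conjXg !(inj_eq (@conjg_inj _ y)) Hk.
Qed.

Lemma connectJ V W y : y \in 'N(G) -> connect (padj G) V W ->
  connect (padj G) (V :^ y) (W :^ y).
Proof.
move=> yN /connectP [p Hp ->]; apply/connectP.
exists (map (fun U => U :^ y) p); last by rewrite (last_map (fun U => U :^ y)).
by apply: homo_path Hp => U U'; apply: padjJ.
Qed.

Lemma padj_sym1 V W : padj G V W -> padj G W V.
Proof.
move=> /and4P [HV HW VW /existsP [p /andP [pV /existsP [q /andP [qW /existsP [k /andP [k0 Hk]]]]]]].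
apply/and4P; split => //; first by rewrite eq_sym.
apply/existsP; exists q; rewrite qW; apply/existsP; exists p; rewrite pV.
by apply/existsP; exists k; rewrite k0 orbC.
Qed.

Lemma padj_sym : connect_sym (padj G).
Proof. by apply: sym_connect_sym => V W; apply/idP/idP; apply: padj_sym1. Qed.

Lemma comp_vert (V0 : {set {perm 'I_n}}) W : isvert G V0 -> W \in Defs.comp G V0 -> isvert G W.
Proof.
rewrite inE => HV0 /connectP [p Hp ->].
elim: p V0 HV0 Hp => //= U p IH V0 _ /andP [H1 Hp].
by apply: IH Hp; case/and4P: H1.
Qed.

Lemma trans_type V W T : fusion_controlled G -> isvert G V -> isvert G W ->
  has_type V T -> has_type W T -> exists2 y, y \in 'N(G) & W = V :^ y.
Proof.
move=> fc HV HW /existsP [p /andP [pV /eqP Ep]] /existsP [q /andP [qW /eqP Eq]].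
case: (vert_mem HV pV) => pG _ ->; case: (vert_mem HW qW) => qG _ ->.
have [x Ex] := ptype_conjugate (etrans Ep (esym Eq)).
have pxG : p ^ x \in G by rewrite Ex.
have [y yN Ey] := fc p x pG pxG.
by exists y => //; rewrite gclsJ -Ey Ex.
Qed.

Lemma fiber_card W U T : fusion_controlled G -> isvert G W -> isvert G U ->
  has_type W T -> has_type U T ->
  #|[set y in 'N(G) | W :^ y == U]| = #|[set y in 'N(G) | W :^ y == W]|.
Proof.
move=> fc HW HU tW tU; have [z zN ->] := trans_type fc HW HU tW tU.
rewrite -[RHS](card_rcoset _ z); apply: eq_card => y.
rewrite mem_rcoset [in RHS]inE groupMr ?groupV // inE; congr (_ && _).
by rewrite conjsgM -[RHS](inj_eq (@conjsg_inj _ z)) conjsgKV.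
Qed.

Lemma count_fibers W T (X : {set {set {perm 'I_n}}}) : fusion_controlled G ->
  isvert G W -> has_type W T -> {in X, forall U, isvert G U && has_type U T} ->
  #|[set y in 'N(G) | W :^ y \in X]| = (#|X| * #|[set y in 'N(G) | W :^ y == W]|)%N.
Proof.
move=> fc HW tW HX.
rewrite -sum1_card (partition_big (fun y => W :^ y) (mem X)) /=; last first.
  by move=> y; rewrite inE => /andP [_ ->].
rewrite -sum_nat_const; apply: eq_bigr => U UX.
case/andP: (HX U UX) => HU tU.
rewrite -(fiber_card fc HW HU tW tU) -sum1_card; apply: eq_bigl => y.
rewrite !inE; case: eqP => [->|_]; by rewrite ?UX ?andbT ?andbF.
Qed.

End Graph.

Section Comp.
Variables (n : nat) (G : {group {perm 'I_n}}) (V0 : {set {perm 'I_n}}).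
Hypothesis fc : fusion_controlled G.
Hypothesis HV0 : isvert G V0.
Local Notation C := (Defs.comp G V0).
Local Open Scope group_scope.
Implicit Types (V W U : {set {perm 'I_n}}) (x y z p q psi : {perm 'I_n}) (T : seq nat).

Definition st W := #|[set y in 'N(G) | W :^ y == W]|.
Definition SC := [set y in 'N(G) | [forall U in C, U :^ y \in C]].

Lemma C_conn W U : W \in C -> U \in C -> connect (padj G) W U.
Proof.
rewrite !inE => HW HU; apply: connect_trans HU.
by rewrite (padj_sym G); exact: HW.
Qed.

Lemma C_SC W y : W \in C -> y \in 'N(G) -> (W :^ y \in C) = [forall U in C, U :^ y \in C].
Proof.
move=> HW yN; apply/idP/forallP => [H U|H]; last by have := H W; rewrite HW.
apply/implyP => HU; move: H; rewrite !inE => H.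
apply: connect_trans H _; apply: connectJ => //; exact: C_conn.
Qed.

Lemma st_gt0 W : 0 < st W.
Proof. by rewrite /st card_gt0; apply/set0Pn; exists 1; rewrite inE group1 conjsg1 eqxx. Qed.

Lemma kG_N T W : W \in C -> has_type W T -> (kG G T * st W)%N = #|'N(G)|.
Proof.
move=> HW tW; have vW := comp_vert HV0 HW.
rewrite /kG /st -(count_fibers (T := T)) //; last by move=> U; rewrite inE.
apply: eq_card => y; rewrite [in LHS]inE.
case yN: (y \in 'N(G)) => //=; rewrite inE isvertJ //=; exact: has_typeJ.
Qed.

Lemma kC_SC T W : W \in C -> has_type W T -> (kC C T * st W)%N = #|SC|.
Proof.
move=> HW tW; have vW := comp_vert HV0 HW.
rewrite /kC /st -(count_fibers (T := T)) //; last first.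
  by move=> U; rewrite inE => /andP [HU ->]; rewrite (comp_vert HV0 HU).
apply: eq_card => y; rewrite [in LHS]inE [in RHS]inE.
case yN: (y \in 'N(G)) => //=; rewrite inE -(C_SC HW yN) has_typeJ // andbT //.
Qed.

End Comp.

Import GRing.Theory.
Section Main.
Variables (n : nat) (G : {group {perm 'I_n}}) (V0 : {set {perm 'I_n}}).
Hypothesis fc : fusion_controlled G.
Hypothesis HV0 : isvert G V0.
Local Notation C := (Defs.comp G V0).
Implicit Types (V W U : {set {perm 'I_n}}) (T : seq nat).

Definition gt V := ptype (repr V).

Lemma gt_type V : isvert G V -> has_type V (gt V).
Proof.
case/isvertP => x _ [_ ->]; apply/existsP; exists (repr (gcls x)).
by rewrite (@mem_repr _ _ x) ?eqxx // inE.
Qed.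

Lemma gt_uniq V T : isvert G V -> has_type V T -> gt V = T.
Proof. by move=> HV; apply: has_type_uniq HV (gt_type HV). Qed.

Lemma kC_gt0 T : in_types C T -> 0 < kC C T.
Proof. by case=> W HW tW; rewrite card_gt0; apply/set0Pn; exists W; rewrite inE HW tW. Qed.

Lemma kC_le T : kC C T <= kG G T.
Proof.
apply: subset_leq_card; apply/subsetP => V /setIdP [HV tV]; rewrite inE tV andbT.
by rewrite (comp_vert HV0 HV).
Qed.

Lemma ratio T : in_types C T ->
  ((kG G T)%:R / (kC C T)%:R = (#|'N(G)%g|)%:R / (#|SC G V0|)%:R :> rat)%R.
Proof.
case=> W HW tW.
rewrite -(kG_N fc HV0 HW tW) -(kC_SC fc HV0 HW tW) !natrM -mulf_div divff ?mulr1 //.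
by rewrite Num.Theory.pnatr_eq0 -lt0n st_gt0.
Qed.

Lemma kC1_uniq T V W : kC C T = 1 -> V \in C -> W \in C -> has_type V T -> has_type W T -> V = W.
Proof.
move=> /eqP /cards1P [a Ea] HV HW tV tW.
have : V \in [set U in C | has_type U T] by rewrite inE HV tV.
have : W \in [set U in C | has_type U T] by rewrite inE HW tW.
by rewrite Ea !inE => /eqP -> /eqP ->.
Qed.

Lemma iso_kC1 : iso_tC G C -> forall T, in_types C T -> kC C T = 1.
Proof.
case=> f [finj finto fonto fadj] T tT.
pose h V := [set U in C | gt U == gt V].
pose f' V := [set U in C | gt U == f V].
have sub : [set f' V | V in C] \subset [set h V | V in C].
  apply/subsetP => _ /imsetP [V HV ->].
  case: (finto V HV) => W HW tW; apply/imsetP; exists W => //.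
  apply/setP => U; rewrite !inE (gt_uniq (comp_vert HV0 HW) tW) //.
have f'inj : {in C &, injective f'}.
  move=> V V' HV HV' E; apply: finj => //.
  case: (finto V HV) => W HW tW.
  have : W \in f' V by apply/setIdP; split => //; rewrite (gt_uniq (comp_vert HV0 HW) tW).
  by rewrite E => /setIdP [_ /eqP <-]; rewrite (gt_uniq (comp_vert HV0 HW) tW).
have hinj : {in C &, injective h}.
  apply/imset_injP; rewrite eqn_leq leq_imset_card /=.
  have Ef : #|[set f' V | V in C]| == #|C| by apply/imset_injP.
  rewrite -(eqP Ef).
  exact: subset_leq_card sub.
apply/eqP; rewrite eqn_leq kC_gt0 // andbT; apply/card_le1_eqP => V W.
move=> /setIdP [HV tV] /setIdP [HW tW]; apply: hinj => //.
by rewrite /h (gt_uniq (comp_vert HV0 HV) tV) (gt_uniq (comp_vert HV0 HW) tW).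
Qed.

Lemma kC1_iso : (forall T, in_types C T -> kC C T = 1) -> iso_tC G C.
Proof.
move=> H1.
have vC V : V \in C -> isvert G V by apply: comp_vert.
have ginj : {in C &, injective gt}.
  move=> V W HV HW E; apply: (kC1_uniq (T := gt V)) => //.
  - by apply: H1; exists V => //; apply: gt_type; apply: vC.
  - by apply: gt_type; apply: vC.
  - by rewrite E; apply: gt_type; apply: vC.
exists gt; split => //.
- by move=> V HV; exists V => //; apply: gt_type; apply: vC.
- by move=> T [V HV tV]; exists V => //; apply: gt_uniq => //; apply: vC.
move=> V W HV HW; split => [Hadj|[_ [V' [W' [HV' HW' Hadj tV tW]]]]].
  split; last by exists V, W; split => //; apply: gt_type; apply: vC.
  case/and4P: (Hadj) => _ _ VW /existsP [p /andP [pV /existsP [q /andP [qW /existsP [k /andP [k0 Hk]]]]]].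
  split; first by move=> E; move: VW; rewrite (ginj V W HV HW E) eqxx.
  have gV : gt V = ptype p by apply: gt_uniq; [apply: vC | apply/existsP; exists p; rewrite pV eqxx].
  have gW : gt W = ptype q by apply: gt_uniq; [apply: vC | apply/existsP; exists q; rewrite qW eqxx].
  exists k => //; rewrite gV gW; case/orP: Hk => /eqP ->; [left | right]; exact: ptype_expg.
have EV : V' = V.
  apply: (kC1_uniq (T := gt V)) => //; last by apply: gt_type; apply: vC.
  by apply: H1; exists V => //; apply: gt_type; apply: vC.
have EW : W' = W.
  apply: (kC1_uniq (T := gt W)) => //; last by apply: gt_type; apply: vC.
  by apply: H1; exists W => //; apply: gt_type; apply: vC.
by rewrite -EV -EW.
Qed.

End Main.

Theorem corollary6p7 (n : nat) (G : {group {perm 'I_n}}) (C : {set {set {perm 'I_n}}}) :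
  fusion_controlled G -> is_component G C ->
  [/\ (forall T T', in_types C T -> in_types C T' ->
         ((kG G T)%:R / (kC C T)%:R = (kG G T')%:R / (kC C T')%:R :> rat)%R),
      (iso_tC G C <->
         exists2 T, in_types C T &
           kC C T = 1 /\ forall T', in_types C T' -> kG G T = kG G T'),
      ((exists2 T, in_types C T &
          forall V, isvert G V -> has_type V T -> V \in C) ->
       forall T', in_types C T' ->
          forall V, isvert G V -> has_type V T' -> V \in C) &
      ((exists2 T, in_types C T & kC C T = kG G T /\ 1 < kG G T) -> ~ iso_tC G C)].
Proof.
move=> fc [V0 HV0 ->].
have R := ratio fc HV0.
have V0C : V0 \in Defs.comp G V0 by rewrite inE connect0.
have tV0 : in_types (Defs.comp G V0) (gt V0).
  exists V0; first exact: V0C.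
  exact: (gt_type HV0).
split.
- by move=> T T' tT tT'; rewrite !R.
- split => [Hiso | [T tT [k1 Hk]]].
    exists (gt V0) => //; split; first exact: (iso_kC1 HV0 Hiso tV0).
    move=> T' tT'.
    have E : ((kG G (gt V0))%:R / (kC (Defs.comp G V0) (gt V0))%:R
              = (kG G T')%:R / (kC (Defs.comp G V0) T')%:R :> rat)%R by rewrite !R.
    move: E; rewrite (iso_kC1 HV0 Hiso tV0) (iso_kC1 HV0 Hiso tT') !divr1 => /eqP.
    by rewrite Num.Theory.eqr_nat => /eqP.
  apply: (kC1_iso HV0) => T' tT'.
  have E : ((kG G T)%:R / (kC (Defs.comp G V0) T)%:R
              = (kG G T')%:R / (kC (Defs.comp G V0) T')%:R :> rat)%R by rewrite !R.
  move: E; rewrite k1 divr1 (Hk T' tT') => E.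
  have x0 : ((kG G T')%:R != 0 :> rat)%R.
    rewrite Num.Theory.pnatr_eq0 -lt0n.
    exact: leq_trans (kC_gt0 tT') (kC_le HV0 T').
  have c0 : ((kC (Defs.comp G V0) T')%:R != 0 :> rat)%R.
    by rewrite Num.Theory.pnatr_eq0 -lt0n kC_gt0.
  have : ((kG G T')%:R * (kC (Defs.comp G V0) T')%:R = (kG G T')%:R * 1 :> rat)%R.
    by rewrite mulr1 {1}E divfK.
  by move/(mulfI x0)/eqP; rewrite Num.Theory.pnatr_eq1 => /eqP.
- move=> [T [W HW tW] Hall] T' [W' HW' tW'] V HV tV.
  have E1 : kC (Defs.comp G V0) T = kG G T.
    apply: eq_card => U; apply/setIdP/idP => [[HU tU]|].
      by rewrite inE (comp_vert HV0 HU) tU.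
    by rewrite inE => /andP [HU tU]; split => //; exact: Hall.
  have EN : #|SC G V0| = #|'N(G)%g|.
    by rewrite -(kG_N fc HV0 HW tW) -(kC_SC fc HV0 HW tW) E1.
  have E2 : kC (Defs.comp G V0) T' = kG G T'.
    apply/eqP; rewrite -(eqn_pmul2r (st_gt0 G W')).
    by rewrite (kG_N fc HV0 HW' tW') (kC_SC fc HV0 HW' tW') EN.
  have sub : [set U in Defs.comp G V0 | has_type U T'] \subset
             [set U | isvert G U & has_type U T'].
    apply/subsetP => U /setIdP [HU tU]; by rewrite inE (comp_vert HV0 HU) tU.
  have := subset_cardP E2 sub => /(_ V).
  rewrite [in RHS]inE HV tV => /setIdP [] //.
- move=> [T tT [E k1]] Hiso.
  by move: k1; rewrite -E (iso_kC1 HV0 Hiso tT).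
Qed.
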